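(* Consider single-input single-output discrete-time state-space models (SSMs) $$x_{k+1}=\mathbf{A}x_k+\mathbf{B}u_k,\qquad y_k=\mathbf{C}x_k+\mathbf{D}u_k,\qquad x_0=0,$$ whose state matrix $\mathbf{A}\in\mathbb{R}^{d\times d}$ is a companion matrix. Such companion SSMs can represent each of the following. (i) (ARIMA) Let $p,q,r\ge 0$ be integers and $\phi_1,\dots,\phi_p,\theta_1,\dots,\theta_q\in\mathbb{R}$. Let $L$ denote the lag operator, $(Lz)_k=z_{k-1}$, and consider the ARIMA$(p,r,q)$ relation $$\Big(1-\sum_{i=1}^p\phi_iL^i\Big)(1-L)^r y_k=\Big(1+\sum_{j=1}^q\theta_jL^j\Big)u_k,$$ which, with zero initial conditions ($u_k=y_k=0$ for $k<0$), determines the output sequence $(y_k)_{k\ge0}$ causally from the input sequence $(u_k)_{k\ge0}$. Then there exist $d\ge 1$, a companion matrix $\mathbf{A}\in\mathbb{R}^{d\times d}$, and $\mathbf{B}\in\mathbb{R}^{d\times1}$, $\mathbf{C}\in\mathbb{R}^{1\times d}$, $\mathbf{D}\in\mathbb{R}$ such that, for every input sequence $(u_k)_{k\ge0}$, the SSM output equals $(y_k)_{k\ge0}$. (ii) (Simple exponential smoothing) Let $0<\alpha<1$ and $p\ge1$. There exists a companion SSM with state dimension $d=p$ such that, for every input sequence $(u_k)_{k\ge0}$ (the observed time series) and every $k\ge p$, $$\mathbf{C}x_k=\alpha u_{k-1}+\alpha(1-\alpha)u_{k-2}+\dots+\alpha(1-\alpha)^{p-1}u_{k-p},$$ i.e.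 the SSM reproduces the simple exponential smoothing recursion $y_k=\sum_{i=1}^p\alpha(1-\alpha)^{i-1}y_{k-i}$ when its input is the series itself. (iii) (Controllable LTI systems) Let $\mathbf{A}\in\mathbb{R}^{d\times d}$, $\mathbf{B}\in\mathbb{R}^{d\times 1}$, $\mathbf{C}\in\mathbb{R}^{1\times d}$, $\mathbf{D}\in\mathbb{R}$ define a discrete-time linear time-invariant system with $(\mathbf{A},\mathbf{B})$ controllable, i.e. the Krylov matrix $[\mathbf{B},\mathbf{A}\mathbf{B},\dots,\mathbf{A}^{d-1}\mathbf{B}]$ is invertible. Then there exist a companion matrix $\mathbf{G}\in\mathbb{R}^{d\times d}$ similar to $\mathbf{A}$ and $\mathbf{B}'\in\mathbb{R}^{d\times1}$, $\mathbf{C}'\in\mathbb{R}^{1\times d}$ such that the SSM $(\mathbf{G},\mathbf{B}',\mathbf{C}',\mathbf{D})$ has the same input–output map (from zero initial state) as $(\mathbf{A},\mathbf{B},\mathbf{C},\mathbf{D})$.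
   Context: A $d\times d$ companion matrix is a matrix of the form $$\mathbf{A}=\begin{bmatrix}0&0&\cdots&0&a_0\\1&0&\cdots&0&a_1\\0&1&\cdots&0&a_2\\\vdots&&\ddots&\vdots&\vdots\\0&0&\cdots&1&a_{d-1}\end{bmatrix},$$ i.e. ones on the first subdiagonal, an arbitrary last column $a=(a_0,\dots,a_{d-1})^T\in\mathbb{R}^d$, and zeros elsewhere. Equivalently $\mathbf{A}=\mathbf{S}+a e_d^T$ where $\mathbf{S}$ is the $d\times d$ down-shift matrix (ones on the first subdiagonal, zeros elsewhere) and $e_d$ is the $d$-th standard basis vector. With $x_0=0$, the state is $x_k=\sum_{j=0}^{k-1}\mathbf{A}^{k-1-j}\mathbf{B}u_j$. The paper states this result informally as ''A companion state matrix SSM can represent ARIMA, exponential smoothing, and controllable linear time-invariant systems''; the three items give the precise meaning of ''represent'' used in its proof. *)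

(* Defs.v *)
From HB Require Import structures.
From mathcomp Require Import all_boot all_order all_algebra.
From mathcomp Require Import reals.
Set Implicit Arguments. Unset Strict Implicit. Unset Printing Implicit Defensive.
Import Order.TTheory GRing.Theory Num.Theory.
Local Open Scope ring_scope.

Section Defs.
Variable R : realType.

Definition companion (d : nat) (a : 'cV[R]_d) : 'M[R]_d :=
  \matrix_(i < d, j < d)
    ((i == j.+1 :> nat)%:R + (j.+1 == d)%:R * a i ord0).

Definition is_companion (d : nat) (A : 'M[R]_d) : Prop :=
  exists a : 'cV[R]_d, A = companion a.

Fixpoint ssm_state (d : nat) (A : 'M[R]_d) (B : 'cV[R]_d) (u : nat -> R)
    (k : nat) : 'cV[R]_d :=
  match k with
  | 0 => 0
  | k'.+1 => A *m ssm_state A B u k' + u k' *: B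
  end.

Definition ssm_out (d : nat) (A : 'M[R]_d) (B : 'cV[R]_d) (C : 'rV[R]_d)
    (D : R) (u : nat -> R) (k : nat) : R :=
  (C *m ssm_state A B u k) ord0 ord0 + D * u k.

(* Apply the lag polynomial P(L) to a sequence z (z_k = 0 for k < 0):
   (P(L) z)_k = sum_i P_i z_{k-i}. *)
Definition lagop (P : {poly R}) (z : nat -> R) (k : nat) : R :=
  \sum_(i < k.+1) P`_i * z (k - i)%N.

Definition ar_poly (p : nat) (phi : nat -> R) : {poly R} :=
  1 - \sum_(1 <= i < p.+1) phi i *: 'X^i.

Definition ma_poly (q : nat) (theta : nat -> R) : {poly R} :=
  1 + \sum_(1 <= j < q.+1) theta j *: 'X^j.

Definition arima_rel (p r q : nat) (phi theta : nat -> R) (u y : nat -> R) : Prop :=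
  forall k, lagop (ar_poly p phi * (1 - 'X) ^+ r) y k = lagop (ma_poly q theta) u k.

Definition krylov (d : nat) (A : 'M[R]_d) (B : 'cV[R]_d) : 'M[R]_d :=
  \matrix_(i < d, j < d) ((A ^+ j *m B) i ord0).

Definition mx_similar (d : nat) (G A : 'M[R]_d) : Prop :=
  exists2 P : 'M[R]_d, P \in unitmx & G = P *m A *m invmx P.

End Defs.

(* Main.v *)
Require Import Defs.
From HB Require Import structures.
From mathcomp Require Import all_boot all_order all_algebra.
From mathcomp Require Import reals.
Import Order.TTheory GRing.Theory Num.Theory.
Local Open Scope ring_scope.
From mathcomp Require Import zify ring.
Set Implicit Arguments. Unset Strict Implicit. Unset Printing Implicit Defensive.

Section H.
Variable R : realType.

Lemma sum_delta d (f : nat -> R) m :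
  \sum_(l < d) (l == m :> nat)%:R * f l = if (m < d)%N then f m else 0.
Proof.
case: ltnP => h.
  rewrite (bigD1 (Ordinal h)) //= eqxx mul1r big1 ?addr0 // => l hl.
  have -> : (l == m :> nat) = false.
    by apply/negbTE; apply: contra hl => /eqP e; apply/eqP/val_inj.
  by rewrite mul0r.
rewrite big1 // => l _.
have -> : (l == m :> nat) = false by apply/negbTE; have := ltn_ord l; lia.
by rewrite mul0r.
Qed.

Lemma sum_shift d (i : nat) (f : nat -> R) :
  \sum_(j < d) (i == j.+1 :> nat)%:R * f j =
    if (0 < i)%N && (i.-1 < d)%N then f i.-1 else 0.
Proof.
case: i => [|i] /=.
  by rewrite big1 // => j _; rewrite mul0r.
rewrite -sum_delta; apply: eq_bigr => j _.
by rewrite eqSS eq_sym.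
Qed.

Lemma companion_mul d (a : 'cV[R]_d) (x : 'cV[R]_d) (f : nat -> R) (i : 'I_d) :
  (forall j : 'I_d, x j ord0 = f j) ->
  (companion a *m x) i ord0 =
  (if (0 < i)%N then f i.-1 else 0) +
  a i ord0 * (if (0 < d)%N then f d.-1 else 0).
Proof.
move=> hf.
rewrite !mxE.
under eq_bigr do rewrite !mxE mulrDl hf.
rewrite big_split /= sum_shift.
congr (_ + _).
  have := ltn_ord i; case: (nat_of_ord i) => //= i' h.
  by rewrite ifT //; lia.
under eq_bigr do rewrite -mulrA mulrCA eq_sym.
rewrite -mulr_sumr.
case: d a x i hf => [|n] a x i hf; first by case: i.
rewrite /=.
have -> : \sum_(i0 < n.+1) ((n.+1 == i0.+1 :> nat)%:R * f i0) = f n.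
  rewrite (sum_shift n.+1 n.+1 f) /=; by rewrite ifT.
by [].
Qed.

Lemma compE d (a : 'cV[R]_d) l j :
  companion a l j = (l == j.+1 :> nat)%:R + (j.+1 == d)%:R * a l ord0.
Proof. by rewrite mxE. Qed.

Lemma krylov_comp d (A : 'M[R]_d) (B : 'cV[R]_d) :
  krylov A B \in unitmx ->
  krylov A B *m companion (invmx (krylov A B) *m (A ^+ d *m B)) = A *m krylov A B.
Proof.
move=> hK; set K := krylov A B; set a := invmx K *m _.
have hKa : K *m a = A ^+ d *m B.
  by rewrite /a mulmxA mulmxV // mul1mx.
have hKE : forall l j, K l j = (A ^+ j *m B) l ord0 by move=> l j; rewrite mxE.
apply/matrixP => i j; rewrite [LHS]mxE [RHS]mxE.
under eq_bigr do rewrite compE mulrDr.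
rewrite big_split /=.
under [X in X + _]eq_bigr do rewrite mulrC hKE.
under [X in _ + X]eq_bigr do rewrite mulrCA.
rewrite -mulr_sumr.
have -> : \sum_(i0 < d) K i i0 * a i0 ord0 = (K *m a) i ord0 by rewrite mxE.
rewrite hKa (sum_delta d (fun l => (A ^+ l *m B) i ord0)).
under eq_bigr do rewrite hKE.
have -> : \sum_j0 A i j0 * (A ^+ j *m B) j0 ord0 = ((A *m (A ^+ j *m B)) i ord0).
  by rewrite mxE.
rewrite mulmxA; have -> : A *m A ^+ j = A ^+ j.+1 by rewrite exprS.
case: ltnP => h.
  have -> : (j.+1 == d) = false by apply/negbTE; rewrite neq_ltn h.
  by rewrite mul0r addr0.
have /eqP -> : (j.+1 == d) by rewrite eqn_leq h ltn_ord.
by rewrite add0r eqxx mul1r.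
Qed.

Lemma part3 d (A : 'M[R]_d) (B : 'cV[R]_d) (C : 'rV[R]_d) (D : R) :
     krylov A B \in unitmx ->
     exists (G : 'M[R]_d) (B' : 'cV[R]_d) (C' : 'rV[R]_d),
       is_companion G /\ mx_similar G A /\
       forall (u : nat -> R) (k : nat), ssm_out G B' C' D u k = ssm_out A B C D u k.
Proof.
move=> hK; set K := krylov A B.
have hG := krylov_comp hK.
set G := companion _ in hG.
have hG' : G = invmx K *m A *m K.
  by rewrite -mulmxA -hG mulmxA mulVmx // mul1mx.
exists G, (invmx K *m B), (C *m K); split; first by exists (invmx (krylov A B) *m (A ^+ d *m B)).
split.
  exists (invmx K); first by rewrite unitmx_inv.
  by rewrite invmxK.
move=> u k.
have hs : ssm_state G (invmx K *m B) u k = invmx K *m ssm_state A B u k.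
  elim: k => [|k IH] /=; first by rewrite mulmx0.
  rewrite IH hG' mulmxDr -!mulmxA (mulmxA K) mulmxV // mul1mx.
  by rewrite scalemxAr.
rewrite /ssm_out hs mulmxA -(mulmxA C) mulmxV // mulmx1. by [].
Qed.

Lemma part2 (alpha : R) (p : nat) : (1 <= p)%N ->
     exists (A : 'M[R]_p) (B : 'cV[R]_p) (C : 'rV[R]_p),
       is_companion A /\
       forall (u : nat -> R) (k : nat), (p <= k)%N ->
         (C *m ssm_state A B u k) ord0 ord0
           = \sum_(1 <= i < p.+1) alpha * (1 - alpha) ^+ (i.-1) * u (k - i)%N.
Proof.
move=> hp.
pose B : 'cV[R]_p := \col_i (i == 0 :> nat)%:R.
exists (companion 0), B, (\row_i (alpha * (1 - alpha) ^+ i)).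
split; first by exists 0.
move=> u k hk.
have hs : forall k (i : 'I_p), ssm_state (companion 0) B u k i ord0
      = if (i < k)%N then u (k.-1 - i)%N else 0.
  elim=> [|k' IH] i /=; first by rewrite mxE.
  rewrite mxE (companion_mul _ _ (f := fun j => if (j < k')%N then u (k'.-1 - j)%N else 0)) //.
  rewrite !mxE mul0r addr0.
  case: (nat_of_ord i) => [|i'] /=; first by rewrite mulr1 add0r subn0.
  rewrite mulr0 addr0 ltnS.
  case: ifP => // _; congr u; lia.
rewrite mxE big_add1 big_mkord /=.
apply: eq_bigr => i _; rewrite !mxE hs ifT; last by have := ltn_ord i; lia.
congr (_ * u _); lia.
Qed.

Lemma lagop_split (P : {poly R}) s k : P`_0 = 1 ->
  lagop P s k = s k + \sum_(i < k) P`_i.+1 * s (k.-1 - i)%N.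
Proof.
move=> h; rewrite /lagop big_ord_recl /= h mul1r subn0; congr (_ + _).
by apply: eq_bigr => i _; rewrite /bump /=; congr (_ * s _); lia.
Qed.

Lemma lagop_split' (P : {poly R}) s k :
  lagop P s k = P`_0 * s k + \sum_(i < k) P`_i.+1 * s (k.-1 - i)%N.
Proof.
rewrite /lagop big_ord_recl /= subn0; congr (_ + _).
by apply: eq_bigr => i _; rewrite /bump /=; congr (_ * s _); lia.
Qed.

Lemma lag_uniq (P Q : {poly R}) u y y' : P`_0 = 1 ->
  (forall k, lagop P y k = lagop Q u k) ->
  (forall k, lagop P y' k = lagop Q u k) -> forall k, y k = y' k.
Proof.
move=> h0 hy hy' k; elim: k {-2}k (leqnn k) => [|K IH] k hk.
  have -> : k = 0%N by lia.
  by have := hy 0%N; rewrite -(hy' 0%N) !lagop_split // !big_ord0 !addr0.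
have := hy k; rewrite -(hy' k) !lagop_split //.
have -> : \sum_(i < k) P`_i.+1 * y (k.-1 - i)%N = \sum_(i < k) P`_i.+1 * y' (k.-1 - i)%N.
  by apply: eq_bigr => i _; rewrite IH //; have := ltn_ord i; lia.
by move/addIr.
Qed.

Lemma inord_max n : inord n = ord_max :> 'I_n.+1.
Proof. by apply: val_inj; rewrite /= inordK. Qed.

Lemma chain n (a' b' : nat -> R) (u : nat -> R) :
  let A := companion (\col_(i < n.+1) a' i) in
  let B := \col_(i < n.+1) b' i in
  let w t := ssm_state A B u t ord_max ord0 in
  forall k (i : 'I_n.+1), ssm_state A B u k i ord0 =
    \sum_(m < i.+1) (if (m < k)%N then a' (i - m)%N * w (k.-1 - m)%N
                                       + b' (i - m)%N * u (k.-1 - m)%N else 0).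
Proof.
move=> A B w; elim=> [|k IH] i /=.
  by rewrite mxE big1 // => m _.
rewrite mxE (companion_mul _ _ (f := fun j => ssm_state A B u k (inord j) ord0)); last first.
  by move=> j; rewrite inord_val.
rewrite /= inord_max !mxE big_ord_recl /= subn0.
rewrite -/(w k).
case: i => [[|i'] hi] /=.
  by rewrite big_ord0 add0r addr0 subn0 (mulrC (u k)).
rewrite IH inordK; last by lia.
rewrite subn0 (mulrC (u k)) [RHS]addrC -[LHS]addrA; congr (_ + _).
apply: eq_bigr => m _; rewrite /bump /= ltnS.
by case: ifP => // _; rewrite !subSS; congr (_ * w _ + _ * u _); lia.
Qed.

Lemma P0 p r (phi : nat -> R) : (ar_poly p phi * (1 - 'X) ^+ r)`_0 = 1.
Proof.
rewrite coef0M coefB coef1 coef_sum big_nat big1 ?subr0 ?mul1r; last by move=> i hi; rewrite coefZ coefXn; case: i hi => // i _; rewrite mulr0.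
by rewrite -horner_coef0 horner_exp hornerD hornerN hornerX hornerC subr0 expr1n.
Qed.


Lemma realize (P Q : {poly R}) : P`_0 = 1 ->
  exists (d : nat) (A : 'M[R]_d) (B : 'cV[R]_d) (C : 'rV[R]_d) (D : R),
       (1 <= d)%N /\ is_companion A /\
       forall u k, lagop P (ssm_out A B C D u) k = lagop Q u k.
Proof.
move=> hP0.
pose n := (size P + size Q)%N.
pose D := Q`_0.
pose a' j := - P`_(n.+1 - j).
pose b' j := Q`_(n.+1 - j) - D * P`_(n.+1 - j).
pose A := companion (\col_(i < n.+1) a' i).
pose B := \col_(i < n.+1) b' i.
exists n.+1, A, B, (\row_(j < n.+1) (j == n :> nat)%:R), D.
split => //; split; first by eexists.
move=> u k.
pose w t := ssm_state A B u t ord_max ord0.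
have hout : forall t, ssm_out A B (\row_(j < n.+1) (j == n :> nat)%:R) D u t = w t + D * u t.
  move=> t; rewrite /ssm_out mxE; congr (_ + _).
  transitivity (\sum_(j < n.+1) (j == n :> nat)%:R * (fun j => ssm_state A B u t (inord j) ord0) j).
    by apply: eq_bigr => j _; rewrite mxE /= inord_val.
  rewrite (sum_delta _ (fun j => ssm_state A B u t (inord j) ord0)) ltnSn.
  by rewrite inord_max.
pose T t m := - P`_m.+1 * w (t.-1 - m)%N + (Q`_m.+1 - D * P`_m.+1) * u (t.-1 - m)%N.
have hT : forall t m, (n <= m)%N -> T t m = 0.
  move=> t m hm.
  have hP : (size P <= m.+1)%N by rewrite /n in hm; lia.
  have hQ : (size Q <= m.+1)%N by rewrite /n in hm; lia.
  rewrite /T !nth_default //.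
  by rewrite mulr0 subrr mul0r oppr0 mul0r addr0.
have hw : forall t, w t = \sum_(m < t) T t m.
  move=> t; rewrite /w (chain a' b' u t ord_max) /=.
  transitivity (\sum_(m < n.+1) (if (m < t)%N then T t m else 0)).
    apply: eq_bigr => m _; case: ifP => // _.
    rewrite /T /a' /b'.
    have -> : (n.+1 - (n - m))%N = m.+1 by have := ltn_ord m; lia.
    by rewrite mulNr.
  rewrite (big_ord_widen (n.+1 + t) (fun m => T t m)) ?leq_addl // big_mkcond /=.
  rewrite (big_ord_widen (n.+1 + t) (fun m => if (m < t)%N then T t m else 0)) ?leq_addr // big_mkcond /=.
  rewrite [RHS]big_mkcond /=; apply: eq_bigr => m _; case: ltnP => // hm.
  by case: ifP => // _; rewrite hT //; lia.
rewrite /lagop.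
under eq_bigr do rewrite hout mulrDr.
rewrite big_split /=.
have -> : \sum_(i < k.+1) P`_i * (D * u (k - i)%N) = D * lagop P u k.
  by rewrite /lagop mulr_sumr; apply: eq_bigr => i _; rewrite mulrCA.
rewrite -/(lagop P w k) -/(lagop Q u k) !lagop_split' hP0 !mul1r hw.
set S1 := \sum_(i < k) P`_i.+1 * w _.
set S2 := \sum_(i < k) Q`_i.+1 * u _.
set S3 := \sum_(i < k) P`_i.+1 * u _.
have -> : \sum_(m < k) T k m = - S1 + S2 - D * S3.
  rewrite /S1 /S2 /S3 mulr_sumr -sumrN -big_split -sumrB /=.
  by apply: eq_bigr => m _; rewrite /T; ring.
rewrite /D; ring.
Qed.
End H.

Theorem proposition1 (R : realType) :
  (* (i) ARIMA *)
  (forall (p r q : nat) (phi theta : nat -> R),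
     exists (d : nat) (A : 'M[R]_d) (B : 'cV[R]_d) (C : 'rV[R]_d) (D : R),
       (1 <= d)%N /\ is_companion A /\
       forall u y : nat -> R, arima_rel p r q phi theta u y ->
         forall k, ssm_out A B C D u k = y k)
  /\
  (* (ii) simple exponential smoothing *)
  (forall (alpha : R) (p : nat), 0 < alpha -> alpha < 1 -> (1 <= p)%N ->
     exists (A : 'M[R]_p) (B : 'cV[R]_p) (C : 'rV[R]_p),
       is_companion A /\
       forall (u : nat -> R) (k : nat), (p <= k)%N ->
         (C *m ssm_state A B u k) ord0 ord0
           = \sum_(1 <= i < p.+1) alpha * (1 - alpha) ^+ (i.-1) * u (k - i)%N)
  /\
  (* (iii) controllable LTI systems *)
  (forall (d : nat) (A : 'M[R]_d) (B : 'cV[R]_d) (C : 'rV[R]_d) (D : R),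
     krylov A B \in unitmx ->
     exists (G : 'M[R]_d) (B' : 'cV[R]_d) (C' : 'rV[R]_d),
       is_companion G /\ mx_similar G A /\
       forall (u : nat -> R) (k : nat), ssm_out G B' C' D u k = ssm_out A B C D u k).
Proof.
split.
  move=> p r q phi theta.
  have [d [A [B [C [D [h1 [h2 h3]]]]]]] :=
    realize (ma_poly q theta) (P0 p r phi).
  exists d, A, B, C, D; split => //; split => //.
  move=> u y hy k.
  apply: esym; apply: (lag_uniq (P0 p r phi) hy) => t.
  exact: h3.
split.
  move=> alpha p _ _ hp; exact: part2.
move=> d A B C D hK; exact: part3.
Qed.
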